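(* Let $X_1,X_2,\dots$ be iid with $P(X_1>u)=\exp(-\int_0^u h(v)dv)$ for all $u>u_0$, where $u_0\ge0$ and $h$ is a positive, continuous, strictly increasing function with $h(v)\to\infty$. Let $S_k=X_1+\dots+X_k$, $\lambda>0$, $b>0$, $\psi(s)=h^{-1}\big(\tfrac4b\log s\big)$ (defined for $s$ large), $g(k,u)=u-\psi(k)$ and $a_k=\max\{1-2\log k/k,0\}$. Then there exist an index $k_0$ and a constant $C$ such that for all $k>k_0$ and $u>0$, $$\frac{\frac{\lambda^k}{k!}P\big(S_k>u+ba_k,\ S_{k-1}\le g(k,u)\big)}{\frac{\lambda^{k+1}}{(k+1)!}P(S_{k+1}>u+b)}\le\frac{C}{\lambda k}.$$ *)

(* Defs.v *)
From HB Require Import structures.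
From mathcomp Require Import all_boot all_order all_algebra.
From mathcomp Require Import all_classical all_reals all_analysis.
Set Implicit Arguments. Unset Strict Implicit. Unset Printing Implicit Defensive.
Import Order.TTheory GRing.Theory Num.Theory.
Import numFieldNormedType.Exports.
Local Open Scope classical_set_scope.
Local Open Scope ring_scope.

Definition mutually_independent {d : measure_display} {T : measurableType d}
  {R : realType} (P : probability T R) (X : nat -> {RV P >-> R}) : Prop :=
  forall (s : seq nat) (B : nat -> set R), uniq s ->
    (forall i, measurable (B i)) ->
    P (\big[setI/setT]_(i <- s) (X i @^-1` B i)) =
    (\prod_(i <- s) P (X i @^-1` B i))%E.

Definition identically_distributed {d : measure_display} {T : measurableType d}
  {R : realType} (P : probability T R) (X : nat -> {RV P >-> R}) : Prop :=
  forall (i : nat) (A : set R), measurable A ->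
    P (X i @^-1` A) = P (X 0%N @^-1` A).

(* Partial sum S_k = X_1 + ... + X_k  (X_j is X (j-1)). *)
Definition psum {d : measure_display} {T : measurableType d}
  {R : realType} (P : probability T R) (X : nat -> {RV P >-> R}) (k : nat) (w : T) : R :=
  \sum_(i < k) X i w.

Definition prob {d : measure_display} {T : measurableType d}
  {R : realType} (P : probability T R) (A : set T) : R := fine (P A).

(* Main.v *)
Require Import Defs.
From HB Require Import structures.
From mathcomp Require Import all_boot all_order all_algebra.
From mathcomp Require Import all_classical all_reals all_analysis measurable_realfun.
From mathcomp Require Import ring lra.
Import Order.TTheory GRing.Theory Num.Theory.
Import numFieldNormedType.Exports.
Local Open Scope classical_set_scope.
Local Open Scope ring_scope.

Definition Gs {R : realType} {d : measure_display} {T : measurableType d}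
  {P : probability T R} (X : nat -> {RV P >-> R}) (n : nat) : set (set T) :=
  [set A | exists B : nat -> set R, (forall i, measurable (B i)) /\
     A = \big[setI/setT]_(i <- iota 0 n) (X i @^-1` B i)].

Lemma bigI_meas (R : realType) (d : measure_display) (T : measurableType d)
  (P : probability T R) (X : nat -> {RV P >-> R}) (s : seq nat) (B : nat -> set R) :
  (forall i, measurable (B i)) ->
  measurable (\big[setI/setT]_(i <- s) (X i @^-1` B i)).
Proof.
move=> mB; elim: s => [|i s IH]; first by rewrite big_nil.
rewrite big_cons; apply: measurableI => //; exact: measurable_funPTI.
Qed.

Lemma indep_core (R : realType) (d : measure_display) (T : measurableType d)
  (P : probability T R) (X : nat -> {RV P >-> R}) :
  mutually_independent X -> forall n j, (n <= j)%N -> forall B, measurable B ->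
  forall E, <<s Gs X n >> E -> P (E `&` X j @^-1` B) = (P E * P (X j @^-1` B))%E.
Proof.
move=> Xind n j nj B mB E sE.
have mF : measurable (X j @^-1` B) by exact: measurable_funPTI.
have PF0 : (0 <= fine (P (X j @^-1` B)))%R.
  by apply: fine_ge0; exact: measure_ge0.
pose r : {nonneg R} := NngNum PF0.
pose m1 := mrestr P mF.
pose m2 := mscale r P.
have Gm : Gs X n `<=` measurable.
  by move=> A [B' [mB' ->]]; exact: bigI_meas.
have Gg : forall i : nat, Gs X n ((fun=> setT) i).
  move=> _; exists (fun=> setT); split => //.
  by rewrite big1 // => i _; rewrite preimage_setT.
have GI : setI_closed (Gs X n).
  move=> A1 A2 [B1 [mB1 ->]] [B2 [mB2 ->]].
  exists (fun i => B1 i `&` B2 i); split; first by move=> i; exact: measurableI.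
  by rewrite -big_split /=; apply: eq_bigr => i _; rewrite preimage_setI.
have m12 : forall A, Gs X n A -> m1 A = m2 A.
  move=> A [B1 [mB1 ->]].
  rewrite /m1 /m2 /mrestr /mscale /=.
  pose B' := fun i => if i == j then B else B1 i.
  have mB' : forall i, measurable (B' i) by move=> i; rewrite /B'; case: ifP.
  have Hs : forall i, i \in iota 0 n -> B' i = B1 i.
    move=> i; rewrite mem_iota add0n /B' => ilt.
    by case: eqP => // ij; move: ilt; rewrite ij ltnNge nj.
  have u : uniq (iota 0 n ++ [:: j]).
    rewrite cat_uniq iota_uniq /= andbT orbF mem_iota add0n -leqNgt.
    exact: nj.
  have E1 : \big[setI/setT]_(i <- iota 0 n) (X i @^-1` B' i) =
            \big[setI/setT]_(i <- iota 0 n) (X i @^-1` B1 i).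
    by apply: eq_big_seq => i /Hs ->.
  have E2 : (\prod_(i <- iota 0 n) P (X i @^-1` B' i) =
            \prod_(i <- iota 0 n) P (X i @^-1` B1 i))%E.
    by apply: eq_big_seq => i /Hs ->.
  have Bj : B' j = B by rewrite /B' eqxx.
  have := Xind (iota 0 n ++ [:: j]) B' u mB'.
  move=> H.
  rewrite (@big_cat _ _ _ _ (iota 0 n) [:: j]) (@big_cat _ _ _ _ (iota 0 n) [:: j]) in H.
  rewrite !big_seq1 in H. rewrite E1 E2 Bj in H; rewrite H.
  rewrite -(Xind (iota 0 n) B1 (iota_uniq 0 n) mB1).
  rewrite fineK 1?muleC //; exact: fin_num_measure.
have m1oo : forall k : nat, (m1 setT < +oo)%E.
  move=> k; rewrite /m1 /mrestr setTI.
  by apply: (le_lt_trans (probability_le1 P mF)); rewrite ltry.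
have cov : \bigcup_(k : nat) (fun _ : nat => (setT : set T)) k = setT.
  by rewrite predeqE => x; split => // _; exists 0%N.
have := @g_sigma_algebra_measure_unique _ R T (Gs X n) Gm (fun=> setT) Gg cov m1 m2 GI m12 m1oo E sE.
move=> HH; have -> : P (E `&` X j @^-1` B) = m2 E by exact: HH.
rewrite /m2 /mscale /=.
rewrite fineK 1?muleC //; exact: fin_num_measure.
Qed.

Lemma Xg_meas (R : realType) (d : measure_display) (T : measurableType d)
  (P : probability T R) (X : nat -> {RV P >-> R}) n i : (i < n)%N ->
  measurable_fun setT (X i : g_sigma_algebraType (Gs X n) -> R).
Proof.
move=> iltn _ B mB; rewrite setTI.
apply: sub_sigma_algebra.
exists (fun k => if k == i then B else setT); split.
  by move=> k; case: ifP.
have ii : i \in iota 0 n by rewrite mem_iota add0n.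
rewrite (bigD1_seq i ii (iota_uniq 0 n)) /= eqxx big1 ?setIT //.
by move=> k /negPf ->; rewrite preimage_setT.
Qed.

Lemma psum_g_meas (R : realType) (d : measure_display) (T : measurableType d)
  (P : probability T R) (X : nat -> {RV P >-> R}) n m : (m <= n)%N ->
  measurable_fun setT (psum X m : g_sigma_algebraType (Gs X n) -> R).
Proof.
move=> mn; rewrite /psum.
apply: (@measurable_sum _ (g_sigma_algebraType (Gs X n)) R setT 'I_m).
move=> i; apply: Xg_meas; exact: leq_trans (ltn_ord i) mn.
Qed.

Lemma gmeas {T : pointedType} {R : realType} {G : set (set T)} {f : T -> R} :
  measurable_fun setT (f : g_sigma_algebraType G -> R) ->
  forall Y, measurable Y -> <<s G >> (f @^-1` Y).
Proof. by move=> mf Y mY; have := mf measurableT Y mY; rewrite setTI. Qed.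

Lemma ev_S (R : realType) (d : measure_display) (T : measurableType d)
  (P : probability T R) (X : nat -> {RV P >-> R}) n A : measurable A ->
  <<s Gs X n >> (psum X n @^-1` A).
Proof.
move=> mA; have := @psum_g_meas R d T P X n n (leqnn n) measurableT A mA.
by rewrite setTI.
Qed.

Lemma ev_D (R : realType) (d : measure_display) (T : measurableType d)
  (P : probability T R) (X : nat -> {RV P >-> R}) n (a b : R) :
  <<s Gs X n.+1 >> [set w | psum X n w <= a /\ b < psum X n w + X n w].
Proof.
have m1 := @psum_g_meas R d T P X n.+1 n (leqnSn n).
have m2 : measurable_fun setT (fun w : g_sigma_algebraType (Gs X n.+1) => psum X n w + X n w).
  by apply: measurable_funD => //; apply: Xg_meas.
have -> : [set w | psum X n w <= a /\ b < psum X n w + X n w] =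
  (psum X n @^-1` `]-oo, a]) `&` ((fun w => psum X n w + X n w) @^-1` `]b, +oo[).
  by apply/seteqP; split => w /=; rewrite !in_itv /= ?andbT.
have h1 := gmeas m1 _ (measurable_itv `]-oo, a]).
have h2 := gmeas m2 _ (measurable_itv `]b, +oo[).
exact: (@measurableI _ (g_sigma_algebraType (Gs X n.+1)) _ _ h1 h2).
Qed.

Definition Smf {R : realType} {d : measure_display} {T : measurableType d}
  {P : probability T R} (X : nat -> {RV P >-> R}) (n : nat) : {mfun T >-> R} :=
  \sum_(i < n) (X i : {mfun T >-> R}).

Lemma SmfE (R : realType) (d : measure_display) (T : measurableType d)
  (P : probability T R) (X : nat -> {RV P >-> R}) n w : Smf X n w = psum X n w.
Proof. by rewrite /Smf mfun_sum. Qed.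

Lemma pair_in (R : realType) (d : measure_display) (T : measurableType d)
  (P : probability T R) (X : nat -> {RV P >-> R}) n :
  (fun w => (psum X n w, X n w)) \in (@mfun _ _ T (R * R)%type).
Proof.
rewrite inE /=; apply: measurable_fun_pair => //.
rewrite /psum; apply: measurable_sum => i //.
Qed.

Definition pairmf {R : realType} {d : measure_display} {T : measurableType d}
  {P : probability T R} (X : nat -> {RV P >-> R}) (n : nat) : {mfun T >-> (R * R)%type} :=
  mfun_Sub (@pair_in R d T P X n).

Lemma prod_rep (R : realType) (d : measure_display) (T : measurableType d)
  (P : probability T R) (X : nat -> {RV P >-> R}) :
  mutually_independent X -> forall n (A : set (R * R)), measurable A ->
  P ((fun w => (psum X n w, X n w)) @^-1` A) =
  (distribution P (Smf X n) \x distribution P (X n))%E A.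
Proof.
move=> Xind n A mA.
have H : forall A1 A2, measurable A1 -> measurable A2 ->
    distribution P (pairmf X n) (A1 `*` A2) =
    (distribution P (Smf X n) A1 * distribution P (X n) A2)%E.
  move=> A1 A2 mA1 mA2.
  rewrite /distribution /pushforward.
  have -> : pairmf X n @^-1` (A1 `*` A2) = psum X n @^-1` A1 `&` X n @^-1` A2.
    by apply/seteqP; split => w /=.
  have -> : Smf X n @^-1` A1 = psum X n @^-1` A1.
    by apply/seteqP; split => w /=; rewrite SmfE.
  exact: (@indep_core R d T P X Xind n n (leqnn n) A2 mA2 _ (@ev_S R d T P X n A1 mA1)).
have := product_measure_unique H mA.
by rewrite /distribution /pushforward => ->.
Qed.
Lemma hint_t (R : realType) (h : R -> R) (t : R) :
  {within `[0, +oo[, continuous h} -> 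
  lebesgue_measure.-integrable `[0, t] (EFin \o h).
Proof.
move=> hc; apply: continuous_compact_integrable; first exact: segment_compact.
apply: continuous_subspaceW hc => x /=; rewrite !in_itv /= andbT => /andP[] //.
Qed.

Lemma int_incr (R : realType) (h : R -> R)
  (hcont : {within `[0, +oo[, continuous h})
  (hinc : forall x y, 0 <= x -> x < y -> h x < h y) (y c : R) :
  0 <= y -> 0 <= c ->
  Rintegral lebesgue_measure `[0, y] h + c * h y <=
  Rintegral lebesgue_measure `[0, y + c] h.
Proof.
move=> y0 c0.
have itf := @hint_t R h (y + c) hcont.
have := @Rintegral_itvB R h (BLeft 0) (BRight (y + c)) y itf.
rewrite !bnd_simp y0 lerDl c0 => /(_ isT isT) HB.
rewrite -lerBrDl HB.
have mI : measurable [set` Interval (BRight y) (BRight (y + c))] by [].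
have itI : lebesgue_measure.-integrable [set` Interval (BRight y) (BRight (y + c))] (EFin \o h).
  apply: integrableS itf => //; apply: subset_itvr; rewrite bnd_simp //.
have itc : lebesgue_measure.-integrable [set` Interval (BRight y) (BRight (y + c))] (EFin \o (fun=> h y)).
  have itc0 : lebesgue_measure.-integrable `[0, y + c] (EFin \o (fun=> h y)).
    apply: continuous_compact_integrable; first exact: segment_compact.
    by apply: continuous_subspaceT => x; exact: cvg_cst.
  apply: integrableS itc0 => //; apply: subset_itvr; rewrite bnd_simp //.
have := @le_Rintegral _ _ R lebesgue_measure _ (fun=> h y) h mI itc itI.
rewrite Rintegral_cst //.
have -> : fine (lebesgue_measure (`]y, y + c]%classic : set R)) = c.
  rewrite (lebesgue_measure_itv (Interval (BRight y) (BRight (y + c)))) /=.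
  rewrite lte_fin; case: ifP => H.
    by rewrite -EFinD /= addrAC subrr add0r.
  by apply/esym/eqP; rewrite eq_le c0 andbT -(lerD2l y) addr0 leNgt H.
rewrite mulrC; apply => x /=; rewrite in_itv /= => /andP[yx _].
by apply/ltW/hinc.
Qed.
Lemma AN_meas (R : realType) (a e : R) :
  measurable [set p : R * R | p.1 <= a /\ e < p.1 + p.2].
Proof.
have -> : [set p : R * R | p.1 <= a /\ e < p.1 + p.2] =
  (fst @^-1` `]-oo, a]) `&` ((fun p : R * R => p.1 + p.2) @^-1` `]e, +oo[).
  by apply/seteqP; split => p /=; rewrite !in_itv /= ?andbT.
apply: measurableI.
- by rewrite -[X in measurable X]setTI; apply: measurable_fst => //; exact: measurable_itv.
- rewrite -[X in measurable X]setTI; apply: measurable_funD => //; exact: measurable_itv.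
Qed.

Lemma prod_cmp (R : realType) (mu : {measure set R -> \bar R})
  (nu : {sigma_finite_measure set R -> \bar R}) (a e c rho : R) :
  0 <= rho ->
  (forall s, s <= a -> (nu [set y | (e + c < s + y)%R] <= rho%:E * nu [set y | (e < s + y)%R])%E) ->
  ((mu \x nu) [set p : R * R | (p.1 <= a)%R /\ (e + c < p.1 + p.2)%R] <=
   rho%:E * (mu \x nu) [set p : R * R | (p.1 <= a)%R /\ (e < p.1 + p.2)%R])%E.
Proof.
move=> rho0 H.
rewrite /product_measure1 /=.
rewrite -ge0_integralZl //; last first.
  exact (@measurable_fun_xsection _ _ R R R nu _ (@AN_meas R a e)).
apply: ge0_le_integral => //.
- exact (@measurable_fun_xsection _ _ R R R nu _ (@AN_meas R a (e + c))).
- apply: measurable_funeM; exact (@measurable_fun_xsection _ _ R R R nu _ (@AN_meas R a e)).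
move=> x _ /=; rewrite /xsection /=.
have [xa|xa] := leP x a.
- have -> : [set y | (x, y) \in [set p : R * R | p.1 <= a /\ e + c < p.1 + p.2]] =
            [set y | e + c < x + y].
    by apply/seteqP; split => y /=; rewrite inE /=; [case|move=> ?; split].
  have -> : [set y | (x, y) \in [set p : R * R | p.1 <= a /\ e < p.1 + p.2]] =
            [set y | e < x + y].
    by apply/seteqP; split => y /=; rewrite inE /=; [case|move=> ?; split].
  exact: H.
- have -> : [set y | (x, y) \in [set p : R * R | p.1 <= a /\ e + c < p.1 + p.2]] = set0.
    apply/seteqP; split => y //=; rewrite inE /= => -[xa' _].
    by move: xa; rewrite ltNge xa'.
  by rewrite measure0 mule_ge0 // lee_fin.
Qed.


Lemma setY_eq (R : realType) (e s : R) :
  [set y : R | e < s + y] = `]e - s, +oo[%classic.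
Proof. by apply/seteqP; split => y /=; rewrite in_itv /= andbT ltrBlDl. Qed.

Lemma tailX (R : realType) (d : measure_display) (T : measurableType d)
  (P : probability T R) (X : nat -> {RV P >-> R}) (h : R -> R) (u0 : R)
  (Xid : identically_distributed X)
  (Xtail : forall u, u0 < u ->
     P [set w | u < X 0%N w] =
     (expR (- Rintegral lebesgue_measure `[0, u] h))%:E) n (e s : R) :
  u0 < e - s ->
  distribution P (X n) [set y | e < s + y] =
  (expR (- Rintegral lebesgue_measure `[0, e - s] h))%:E.
Proof.
move=> hu; rewrite /distribution /pushforward setY_eq Xid //.
rewrite -Xtail //; congr (P _); apply/seteqP; split => w /=;
  by rewrite in_itv /= andbT.
Qed.

Theorem lemma8 (R : realType) (d : measure_display) (T : measurableType d)
  (P : probability T R) (X : nat -> {RV P >-> R})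
  (h : R -> R) (u0 lam b : R) (psi : R -> R)
  (hpos : forall v, 0 <= v -> 0 < h v)
  (hcont : {within `[0, +oo[, continuous h})
  (hinc : forall x y, 0 <= x -> x < y -> h x < h y)
  (hinf : h x @[x --> +oo] --> +oo)
  (u0_ge0 : 0 <= u0)
  (Xind : mutually_independent X)
  (Xid : identically_distributed X)
  (Xtail : forall u, u0 < u ->
     P [set w | u < X 0%N w] =
     (expR (- Rintegral lebesgue_measure `[0, u] h))%:E)
  (lam_gt0 : 0 < lam) (b_gt0 : 0 < b)
  (psi_def : exists s0 : R, forall s, s0 < s ->
     0 <= psi s /\ h (psi s) = 4 / b * ln s) :
  let g := fun (k : nat) (u : R) => u - psi k%:R in
  let a := fun k : nat => Num.max (1 - 2 * ln k%:R / k%:R) 0 in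
  exists (k0 : nat) (C : R), forall (k : nat) (u : R), (k0 < k)%N -> 0 < u ->
    (lam ^+ k / (k`!)%:R *
       prob P [set w | u + b * a k < psum X k w /\ psum X k.-1 w <= g k u])
    / (lam ^+ k.+1 / (k.+1`!)%:R * prob P [set w | u + b < psum X k.+1 w])
    <= C / (lam * k%:R).
Proof.
move=> g a.
case: psi_def => s0 Hpsi.
pose I := fun t : R => Rintegral lebesgue_measure `[0, t] h.
pose b1 := b + u0 + 1.
have b1u0 : u0 < b1 by rewrite /b1; lra.
pose q := expR (- I b1).
have q_gt0 : 0 < q by exact: expR_gt0.
exists (maxn (maxn (Num.truncn s0) (Num.truncn (expR (b * h u0 / 4)))) 100), (2 / q).
move=> k u; rewrite !gtn_max => /andP[/andP[k1 k2] k3] u_gt0.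
have kR : s0 < k%:R.
  apply: (lt_le_trans (truncnS_gt s0)); rewrite ler_nat; exact: k1.
have kR2 : expR (b * h u0 / 4) < k%:R.
  apply: (lt_le_trans (truncnS_gt _)); rewrite ler_nat; exact: k2.
have k100 : (100 : R) < k%:R by rewrite ltr_nat.
have k_gt0 : 0 < k%:R :> R by lra.
have [psi0 hpsi] := Hpsi k%:R kR.
set ps := psi k%:R in psi0 hpsi.
have lnk0 : 0 <= ln (k%:R : R) by apply: ln_ge0; lra.
have lnk_big : b * h u0 / 4 < ln (k%:R : R).
  rewrite -[X in X < _]expRK ltr_ln //; rewrite posrE //; exact: expR_gt0.
have lnk_small : ln (k%:R : R) <= k%:R / 4.
  have -> : (k%:R : R) = 16 * (k%:R / 16) by field.
  rewrite lnM ?posrE //; last by lra.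
  have h1 := @ln_sublinear R 16 ltac:(lra).
  have h2 := @ln_sublinear R (k%:R / 16) ltac:(lra).
  lra.
have a_ge : 1 / 2 <= a k.
  rewrite /a le_max; apply/orP; left.
  have : 2 * ln (k%:R : R) / k%:R <= 1 / 2.
    rewrite ler_pdivrMr //; lra.
  lra.
have ps_gt : u0 < ps.
  rewrite ltNge; apply/negP => H.
  have : h ps <= h u0.
    case: (ltrP ps u0) => H'; first by apply/ltW/hinc.
    by have -> : ps = u0 by apply/le_anti; rewrite H H'.
  rewrite hpsi => H2.
  have H1 : h u0 < 4 / b * ln (k%:R : R).
    rewrite mulrAC ltr_pdivlMr // mulrC; lra.
  by have := lt_le_trans H1 H2; rewrite ltxx.
pose c := b * a k.
have c_ge0 : 0 <= c by rewrite /c; apply: mulr_ge0; lra.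
pose rho := expR (- (c * h ps)).
have rho_ge0 : 0 <= rho by apply/ltW/expR_gt0.
have rho_k : rho * (k%:R * k%:R) <= 1.
  have -> : (k%:R : R) = expR (ln k%:R) by rewrite lnK // posrE.
  rewrite /rho -!expRD expR_le1.
  have -> : c * h ps = 4 * a k * ln (k%:R : R) by rewrite hpsi /c; field; lra.
  nra.
have [n kn] : exists n, k = n.+1.
  by exists k.-1; rewrite prednK // (ltn_trans _ k3).
subst k.
have psumS : forall m w, psum X m.+1 w = psum X m w + X m w.
  by move=> m w; rewrite /psum big_ord_recr.
pose AN := [set p : R * R | p.1 <= u - ps /\ u + c < p.1 + p.2].
pose AD := [set p : R * R | p.1 <= u - ps /\ u < p.1 + p.2].
pose f := fun w => (psum X n w, X n w).
have EN : [set w | u + b * a n.+1 < psum X n.+1 w /\ psum X n.+1.-1 w <= g n.+1 u]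
    = f @^-1` AN.
  apply/seteqP; split => w /=; rewrite psumS /g -/ps -/c.
    by case=> ? ?; split.
  by case=> ? ?; split.
have mAN : measurable AN by exact: AN_meas.
have mAD : measurable AD by exact: AN_meas.
have mfAN : measurable (f @^-1` AN) by exact: (measurable_funPTI (pairmf X n) mAN).
have mfAD : measurable (f @^-1` AD) by exact: (measurable_funPTI (pairmf X n) mAD).
have Hpt : forall s, s <= u - ps ->
    (distribution P (X n) [set y | (u + c < s + y)%R] <=
     rho%:E * distribution P (X n) [set y | (u < s + y)%R])%E.
  move=> s hs.
  have us : ps <= u - s by lra.
  rewrite (@tailX R d T P X h u0 Xid Xtail n (u + c) s); last by lra.
  rewrite (@tailX R d T P X h u0 Xid Xtail n u s); last by lra.
  rewrite -EFinM lee_fin /rho -expRD ler_expR.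
  have := @int_incr R h hcont hinc (u - s) c ltac:(lra) c_ge0.
  have -> : u + c - s = u - s + c by ring.
  have hle : h ps <= h (u - s).
    case: (ltrP ps (u - s)) => H'; first by apply/ltW/hinc.
    by have -> : ps = u - s by apply/le_anti; rewrite us H'.
  have : c * h ps <= c * h (u - s) by apply: ler_wpM2l.
  rewrite /I; lra.
have cmp := @prod_cmp R (distribution P (Smf X n)) (distribution P (X n)) (u - ps) u c rho rho_ge0 Hpt.
rewrite -/AN -/AD in cmp.
rewrite -(@prod_rep R d T P X Xind n AN mAN) -(@prod_rep R d T P X Xind n AD mAD) in cmp.
have ED : [set w | psum X n w <= u - ps /\ u < psum X n w + X n w] = f @^-1` AD by [].
have Hind := @indep_core R d T P X Xind n.+1 n.+1 (leqnn _) `]b1, +oo[%classic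
  (measurable_itv _) _ (@ev_D R d T P X n (u - ps) u).
rewrite ED in Hind.
have Pq : P (X n.+1 @^-1` `]b1, +oo[%classic) = q%:E.
  rewrite Xid; last exact: measurable_itv.
  rewrite -Xtail //; congr (P _); apply/seteqP; split => w /=;
    by rewrite in_itv /= andbT.
rewrite Pq in Hind.
pose EDD := [set w | u + b < psum X n.+2 w].
have mEDD : measurable EDD.
  have -> : EDD = Smf X n.+2 @^-1` `]u + b, +oo[%classic.
    by apply/seteqP; split => w /=; rewrite SmfE in_itv /= andbT.
  exact: measurable_funPTI.
have sub : f @^-1` AD `&` X n.+1 @^-1` `]b1, +oo[%classic `<=` EDD.
  move=> w [[/= h1 h2]]; rewrite in_itv /= andbT => h3.
  rewrite /EDD /= psumS psumS; rewrite /b1 in h3; lra.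
have le2 : (P (f @^-1` AD) * q%:E <= P EDD)%E.
  rewrite -Hind; apply: le_measure; rewrite ?inE //.
  apply: measurableI => //; exact: measurable_funPTI.
rewrite EN /prob -/EDD.
have fin1 := fin_num_measure P _ mfAN.
have fin2 := fin_num_measure P _ mfAD.
have fin3 := fin_num_measure P _ mEDD.
move: cmp le2.
rewrite -(fineK fin1) -(fineK fin2) -(fineK fin3) -EFinM -EFinM !lee_fin.
have xN0 : 0 <= fine (P (f @^-1` AN)) by apply: fine_ge0; exact: measure_ge0.
have xD0 : 0 <= fine (P (f @^-1` AD)) by apply: fine_ge0; exact: measure_ge0.
have xDD0 : 0 <= fine (P EDD) by apply: fine_ge0; exact: measure_ge0.
move: xN0 xD0 xDD0.
set xN := fine (P (f @^-1` AN)).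
set xD := fine (P (f @^-1` AD)).
set xDD := fine (P EDD).
move=> xN0 xD0 xDD0 cmp le2.
have k0 : (0 : R) < n.+1%:R by [].
have fac1 : (0 : R) < (n.+1`!)%:R by rewrite ltr0n fact_gt0.
have [D0|Dpos] := eqVneq xDD 0.
  rewrite D0 mulr0 invr0 mulr0; apply: divr_ge0; last by apply/ltW/mulr_gt0.
  by apply: divr_ge0 => //; exact/ltW.
have Dgt : 0 < xDD by rewrite lt_def Dpos xDD0.
set K := lam ^+ n.+1 / (n.+1`!)%:R.
have K0 : 0 < K by apply: divr_gt0 => //; exact: exprn_gt0.
have eK : lam ^+ n.+2 / (n.+2`!)%:R = K * (lam / n.+2%:R).
  rewrite /K factS natrM exprS; field.
  by apply/andP; split; apply: lt0r_neq0.
rewrite eK.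
have e2 : (n.+2%:R : R) = n.+1%:R + 1 by rewrite -natr1.
have -> : K * xN / (K * (lam / n.+2%:R) * xDD) = xN * n.+2%:R / (lam * xDD).
  field.
  have n0 : (0 : R) <= n%:R by [].
  by apply/and4P; split; apply: lt0r_neq0 => //; lra.
rewrite ler_pdivrMr; last by apply: mulr_gt0.
have -> : 2 / q / (lam * n.+1%:R) * (lam * xDD) = 2 * xDD / (q * n.+1%:R).
  field; apply/and3P; split; apply: lt0r_neq0 => //.
rewrite ler_pdivlMr; last by apply: mulr_gt0.
rewrite e2.
move: rho_k; set kk := (n.+1%:R : R) => rho_k.
have h1 : xN * ((kk + 1) * (q * kk)) <= rho * xD * ((kk + 1) * (q * kk)).
  apply: ler_wpM2r => //; apply: mulr_ge0; [lra|apply: mulr_ge0; lra].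
have h2 : rho * (kk + 1) * kk * (xD * q) <= rho * (kk + 1) * kk * xDD.
  apply: ler_wpM2l => //; apply: mulr_ge0; [apply: mulr_ge0|]; lra.
have h3 : rho * kk * xDD * (kk + 1) <= rho * kk * xDD * (2 * kk).
  apply: ler_wpM2l; [apply: mulr_ge0; [apply: mulr_ge0|]|]; lra.
have h4 : rho * (kk * kk) * (2 * xDD) <= 1 * (2 * xDD).
  apply: ler_wpM2r => //; lra.
nra.
Qed.
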